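(* Let $R$ be a ring and $M$ a left $R$-module. Then $\xi(M)$ is hollow in $R\text{-}\mathrm{Tors}$ if and only if the set $\{\chi(M/N)\mid N\subsetneq M\text{ a submodule}\}$ is directed (any two members have an upper bound in the set).
   Context: $R\text{-}\mathrm{Tors}$ is the lattice of hereditary torsion theories on left $R$-modules, ordered by $\tau\leq\sigma$ iff the torsion class $\mathbb{T}_\tau\subseteq\mathbb{T}_\sigma$; $\bigwedge U$ is the theory with torsion class $\bigcap_{\tau\in U}\mathbb{T}_\tau$ and $\bigvee U$ the theory with torsionfree class $\bigcap_{\tau\in U}\mathbb{F}_\tau$. $\xi(M)$ is the least torsion theory for which $M$ is torsion, $\chi(M)$ the greatest for which $M$ is torsionfree. An element $\tau$ is hollow in $R\text{-}\mathrm{Tors}$ if it is irreducible in the dual lattice, i.e. for all $\alpha,\beta\leq\tau$ with $\tau\leq\alpha\vee\beta$ one has $\tau\leq\alpha$ or $\tau\leq\beta$. *)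

(* Defs.v *)
From HB Require Import structures.
From mathcomp Require Import all_boot all_order all_algebra.
Set Implicit Arguments. Unset Strict Implicit. Unset Printing Implicit Defensive.
Import GRing.Theory.
Local Open Scope ring_scope.

Section TorsDefs.
Variable R : pzRingType.

Definition modclass := lmodType R -> Prop.

Definition hom_zero (M N : lmodType R) : Prop :=
  forall (f : {linear M -> N}) (x : M), f x = 0.

Definition leftorth (F : modclass) : modclass :=
  fun M => forall N : lmodType R, F N -> hom_zero M N.
Definition rightorth (T : modclass) : modclass :=
  fun N => forall M : lmodType R, T M -> hom_zero M N.

Record tpair := Tpair { tT : modclass; tF : modclass }.

(* (T, F) is a torsion theory: T = {M | Hom(M,F)=0}, F = {N | Hom(T,N)=0};
   hereditary: T closed under submodules (= injective linear maps into M). *)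
Definition is_htt (t : tpair) : Prop :=
  (forall M, tT t M <-> leftorth (tF t) M) /\
  (forall N, tF t N <-> rightorth (tT t) N) /\
  (forall (N M : lmodType R) (f : {linear N -> M}),
      injective f -> tT t M -> tT t N).

Definition tors_le (t s : tpair) : Prop := forall M, tT t M -> tT s M.

Definition tors_join (a b : tpair) : tpair :=
  let F := fun N => tF a N /\ tF b N in Tpair (leftorth F) F.

(* xi(M): meet of all hereditary torsion theories for which M is torsion
   (torsion class = intersection of their torsion classes) *)
Definition xi (M : lmodType R) : tpair :=
  let T := fun N => forall t, is_htt t -> tT t M -> tT t N in
  Tpair T (rightorth T).

(* chi(M): join of all hereditary torsion theories for which M is
   torsionfree (torsionfree class = intersection of their torsionfree classes) *)
Definition chi (M : lmodType R) : tpair :=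
  let F := fun N => forall t, is_htt t -> tF t M -> tF t N in
  Tpair (leftorth F) F.

(* hollow = irreducible in the dual lattice *)
Definition hollow (t : tpair) : Prop :=
  forall a b, is_htt a -> is_htt b -> tors_le a t -> tors_le b t ->
    tors_le t (tors_join a b) -> tors_le t a \/ tors_le t b.

(* (Q, p) presents the quotient M/N: p surjective linear with kernel N *)
Definition is_quotient (M : lmodType R) (N : M -> Prop) (Q : lmodType R)
  (p : {linear M -> Q}) : Prop :=
  (forall q : Q, exists x : M, p x = q) /\ (forall x : M, p x = 0 <-> N x).

Definition proper_sub (M : lmodType R) (N : M -> Prop) : Prop :=
  exists x : M, ~ N x.

Definition quot_chi_directed (M : lmodType R) : Prop :=
  forall (N1 : M -> Prop) (Q1 : lmodType R) (p1 : {linear M -> Q1})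
         (N2 : M -> Prop) (Q2 : lmodType R) (p2 : {linear M -> Q2}),
    proper_sub N1 -> is_quotient N1 p1 ->
    proper_sub N2 -> is_quotient N2 p2 ->
    exists (N3 : M -> Prop) (Q3 : lmodType R) (p3 : {linear M -> Q3}),
      [/\ proper_sub N3, is_quotient N3 p3,
          tors_le (chi Q1) (chi Q3) & tors_le (chi Q2) (chi Q3)].

End TorsDefs.

(* Main.v *)
Require Import Defs.
From mathcomp Require Import all_boot all_order all_algebra.
From HB Require Import structures.
From mathcomp Require Import boolp classical_sets.
Set Implicit Arguments. Unset Strict Implicit. Unset Printing Implicit Defensive.
Import GRing.Theory.
Local Open Scope ring_scope.

Definition submod (R : pzRingType) (V : lmodType R) (P : V -> Prop) :=
  P 0 /\ forall r x y, P x -> P y -> P (r *: x + y).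
Definition fixP (R : pzRingType) (V : lmodType R) (P : V -> Prop) : V -> Prop :=
  fun x => if `[< submod P >] then P x else x = 0.
Lemma fixP_sub (R : pzRingType) (V : lmodType R) (P : V -> Prop) : submod (fixP P).
Proof.
rewrite /fixP; case: asboolP => [[]//|_]; split=> // r x y -> ->.
by rewrite scaler0 addr0.
Qed.
Lemma fixPE (R : pzRingType) (V : lmodType R) (P : V -> Prop) :
  submod P -> forall x, fixP P x <-> P x.
Proof. by move=> h x; rewrite /fixP asboolT. Qed.

Section Subm.
Variables (R : pzRingType) (V : lmodType R) (P0 : V -> Prop).
Let P := fixP P0.
Let P0' : P 0. Proof. exact: (fixP_sub P0).1. Qed.
Let PD : forall r x y, P x -> P y -> P (r *: x + y). Proof. exact: (fixP_sub P0).2. Qed.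

Let PA x y : P x -> P y -> P (x + y).
Proof. by move=> px py; have := PD 1 px py; rewrite scale1r. Qed.
Let PZ r x : P x -> P (r *: x).
Proof. by move=> px; have := PD r px P0'; rewrite addr0. Qed.
Let PN x : P x -> P (- x).
Proof. by move=> px; have := PZ (-1) px; rewrite scaleN1r. Qed.

Record subm := Subm { subm_val :> V; subm_prop : `[< P subm_val >] }.
HB.instance Definition _ := [isSub for subm_val].
HB.instance Definition _ := [Choice of subm by <:].

Definition sm0 := Subm (asboolT P0').
Definition smadd (a b : subm) := Subm (asboolT (PA (asboolP _ (subm_prop a)) (asboolP _ (subm_prop b)))).
Definition smopp (a : subm) := Subm (asboolT (PN (asboolP _ (subm_prop a)))).
Definition smscale r (a : subm) := Subm (asboolT (PZ r (asboolP _ (subm_prop a)))).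

Lemma smaddA : associative smadd.
Proof. by move=> a b c; apply: val_inj; rewrite /= addrA. Qed.
Lemma smaddC : commutative smadd.
Proof. by move=> a b; apply: val_inj; rewrite /= addrC. Qed.
Lemma smadd0 : left_id sm0 smadd.
Proof. by move=> a; apply: val_inj; rewrite /= add0r. Qed.
Lemma smaddN : left_inverse sm0 smopp smadd.
Proof. by move=> a; apply: val_inj; rewrite /= addNr. Qed.
HB.instance Definition _ := GRing.isZmodule.Build subm smaddA smaddC smadd0 smaddN.
Lemma smscaleA a b v : smscale a (smscale b v) = smscale (a * b) v.
Proof. by apply: val_inj; rewrite /= scalerA. Qed.
Lemma smscale1 : left_id 1 smscale.
Proof. by move=> v; apply: val_inj; rewrite /= scale1r. Qed.
Lemma smscaleDr : right_distributive smscale +%R.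
Proof. by move=> a u v; apply: val_inj; rewrite /= scalerDr. Qed.
Lemma smscaleDl v : {morph smscale^~ v: a b / a + b}.
Proof. by move=> a b; apply: val_inj; rewrite /= scalerDl. Qed.
HB.instance Definition _ := GRing.Zmodule_isLmodule.Build R subm smscaleA smscale1 smscaleDr smscaleDl.
Lemma subm_val_lin : linear (subm_val : subm -> V).
Proof. by []. Qed.
HB.instance Definition _ := GRing.isLinear.Build R subm V *:%R subm_val subm_val_lin.
Lemma subm_val_inj : injective (subm_val : subm -> V).
Proof. exact: val_inj. Qed.
End Subm.

Section Quot.
Variables (R : pzRingType) (V : lmodType R) (A00 : V -> Prop).
Let A := fixP A00.
Let A0 : A 0. Proof. exact: (fixP_sub A00).1. Qed.
Let AD : forall r x y, A x -> A y -> A (r *: x + y). Proof. exact: (fixP_sub A00).2. Qed.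
Let AA x y : A x -> A y -> A (x + y).
Proof. by move=> px py; have := AD 1 px py; rewrite scale1r. Qed.
Let AZ r x : A x -> A (r *: x).
Proof. by move=> px; have := AD r px A0; rewrite addr0. Qed.
Let AN x : A x -> A (- x).
Proof. by move=> px; have := AZ (-1) px; rewrite scaleN1r. Qed.

Definition cr (x : V) : V := choose (fun y => `[< A (y - x) >]) x.
Lemma crP x : A (cr x - x).
Proof.
have := @chooseP V (fun y => `[< A (y - x) >]) x.
rewrite subrr; move=> /(_ (asboolT A0)) /asboolP. done.
Qed.
Lemma cr_eq x y : A (x - y) -> cr x = cr y.
Proof.
move=> Axy; rewrite /cr.
have -> : choose (fun z => `[< A (z - x) >]) =1 choose (fun z => `[< A (z - y) >]).
  apply: eq_choose => z; apply/asboolP/asboolP => H.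
    by have := AA H Axy; rewrite addrA subrK.
  by have := AA H (AN Axy); rewrite opprB addrA subrK.
apply: choose_id; apply/asboolP => //; by rewrite subrr.
Qed.
Lemma cr_eqE x y : cr x = cr y -> A (x - y).
Proof.
move=> e; have h := AA (AN (crP x)) (crP y); move: h; rewrite e.
by rewrite opprB addrA subrK.
Qed.

Record quot := Quot { qval : V; qval_prop : cr qval == qval }.
HB.instance Definition _ := [isSub for qval].
HB.instance Definition _ := [Choice of quot by <:].

Lemma crK x : cr (cr x) == cr x.
Proof. by apply/eqP; apply: cr_eq; exact: crP. Qed.
Definition pi x := Quot (crK x).
Lemma piK a : pi (qval a) = a.
Proof. by apply: val_inj; rewrite /= (eqP (qval_prop a)). Qed.
Lemma pi_eq x y : pi x = pi y <-> A (x - y).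
Proof. split; first by move=> /(congr1 qval) /= /cr_eqE.
by move=> h; apply: val_inj; rewrite /= (cr_eq h). Qed.

Definition q0 := pi 0.
Definition qadd a b := pi (qval a + qval b).
Definition qopp a := pi (- qval a).
Definition qscale r a := pi (r *: qval a).

Lemma piD x y : qadd (pi x) (pi y) = pi (x + y).
Proof. apply/pi_eq => /=.
have := AA (crP x) (crP y).
by rewrite addrACA -opprD.
Qed.
Lemma piN x : qopp (pi x) = pi (- x).
Proof. apply/pi_eq => /=; have := AN (crP x). by rewrite opprB opprK addrC. Qed.
Lemma piZ r x : qscale r (pi x) = pi (r *: x).
Proof. apply/pi_eq => /=; have := AZ r (crP x). by rewrite scalerBr. Qed.

Lemma qaddA : associative qadd.
Proof. by move=> a b c; rewrite -[a]piK -[b]piK -[c]piK !piD addrA. Qed.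
Lemma qaddC : commutative qadd.
Proof. by move=> a b; rewrite -[a]piK -[b]piK !piD addrC. Qed.
Lemma qadd0 : left_id q0 qadd.
Proof. by move=> a; rewrite -[a]piK /q0 piD add0r. Qed.
Lemma qaddN : left_inverse q0 qopp qadd.
Proof. by move=> a; rewrite -[a]piK piN piD addNr. Qed.
HB.instance Definition _ := GRing.isZmodule.Build quot qaddA qaddC qadd0 qaddN.
Lemma qscaleA a b v : qscale a (qscale b v) = qscale (a * b) v.
Proof. by rewrite -[v]piK !piZ scalerA. Qed.
Lemma qscale1 : left_id 1 qscale.
Proof. by move=> v; rewrite -[v]piK piZ scale1r. Qed.
Lemma piD' x y : (pi x + pi y : quot) = pi (x + y).
Proof. exact: piD. Qed.
Lemma qscaleDr : right_distributive qscale +%R.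
Proof.
have qpK (w : quot) : qval (pi (qval w)) = qval w by rewrite piK.
by move=> a u v; rewrite -[u]piK -[v]piK !piD' !piZ !qpK scalerDr.
Qed.
Lemma qscaleDl v : {morph qscale^~ v: a b / a + b}.
Proof. by move=> a b; rewrite -[v]piK !piZ piD' scalerDl. Qed.
HB.instance Definition _ := GRing.Zmodule_isLmodule.Build R quot qscaleA qscale1 qscaleDr qscaleDl.
Lemma pi_lin : linear (pi : V -> quot).
Proof.
move=> r x y; rewrite -piD' -piZ.
done.
Qed.
HB.instance Definition _ := GRing.isLinear.Build R V quot *:%R pi pi_lin.
Lemma pi0 x : pi x = 0 <-> A x.
Proof. rewrite -[0]/(pi 0) pi_eq subr0. done. Qed.
End Quot.

Lemma subm_ex (R : pzRingType) (V : lmodType R) (P : V -> Prop) :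
  submod P -> forall x, P x -> exists a : subm P, subm_val a = x.
Proof.
move=> h x px.
have q : `[< fixP P x >] by apply/asboolP; apply/fixPE.
by exists (Subm q).
Qed.
Lemma subm_valP (R : pzRingType) (V : lmodType R) (P : V -> Prop) :
  submod P -> forall a : subm P, P (subm_val a).
Proof. by move=> h [x /asboolP /= /(fixPE h)]. Qed.
Lemma pi_surj (R : pzRingType) (V : lmodType R) (A : V -> Prop) (z : quot A) :
  exists x, pi A x = z.
Proof. by exists (qval z); rewrite piK. Qed.
Lemma pi_ker (R : pzRingType) (V : lmodType R) (A : V -> Prop) :
  submod A -> forall x, pi A x = 0 <-> A x.
Proof. by move=> h x; rewrite pi0 fixPE. Qed.

Lemma piBp (R : pzRingType) (V : lmodType R) (A : V -> Prop) x y : pi A (x - y) = pi A x - pi A y.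
Proof. exact: linearB. Qed.
Lemma piDp (R : pzRingType) (V : lmodType R) (A : V -> Prop) x y : pi A (x + y) = pi A x + pi A y.
Proof. exact: linearD. Qed.
Lemma piZp (R : pzRingType) (V : lmodType R) (A : V -> Prop) r x : pi A (r *: x) = r *: pi A x.
Proof. exact: linearZZ. Qed.
Lemma pi0p (R : pzRingType) (V : lmodType R) (A : V -> Prop) : pi A 0 = 0.
Proof. exact: linear0. Qed.

Definition mklin (R : pzRingType) (U V : lmodType R) (f : U -> V) (H : linear f) : {linear U -> V} :=
  HB.pack f (GRing.isLinear.Build R U V *:%R f H).

Section Img.
Variables (R : pzRingType) (M X : lmodType R) (f : {linear M -> X}).
Definition imP (y : X) := exists x, f x = y.
Lemma imP_sub : submod imP.
Proof.
split; first by exists 0; rewrite linear0.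
by move=> r _ _ [x <-] [y <-]; exists (r *: x + y); rewrite linearP.
Qed.
Local Notation img := (subm imP).
Definition cores (x : M) : img := Subm (asboolT ((fixPE imP_sub (f x)).2 (ex_intro _ x erefl))).
Lemma cores_val x : subm_val (cores x) = f x. Proof. by []. Qed.
Lemma cores_lin : linear cores.
Proof. by move=> r x y; apply: val_inj => /=; rewrite linearP. Qed.
Definition coresL : {linear M -> img} := mklin cores_lin.
Lemma cores_sur (a : img) : exists x, coresL x = a.
Proof.
have [x hx] := subm_valP imP_sub a.
by exists x; apply: val_inj; rewrite /= hx.
Qed.
Lemma cores0 x : coresL x = 0 <-> f x = 0.
Proof. split; first by move=> /(congr1 (@subm_val _ _ _)).
by move=> h; apply: val_inj; rewrite /= h. Qed.
End Img.
Notation img f := (subm (imP f)).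

Section Basic.
Variable R : pzRingType.

Lemma htt_quot (t : tpair R) (Y Z : lmodType R) (p : {linear Y -> Z}) :
  is_htt t -> (forall z, exists y, p y = z) -> tT t Y -> tT t Z.
Proof.
case=> hT [hF _] sur ty; apply/hT => W fw g z.
have [y <-] := sur z.
exact: ((hT Y).1 ty W fw (g \o p) y).
Qed.

Lemma htt_subF (t : tpair R) (W Z : lmodType R) (i : {linear W -> Z}) :
  is_htt t -> injective i -> tF t Z -> tF t W.
Proof.
case=> hT [hF _] inj fz; apply/hF => Y ty g y.
apply: inj; rewrite linear0.
exact: ((hF Z).1 fz Y ty (i \o g) y).
Qed.

Lemma xi_htt (M : lmodType R) : is_htt (xi M).
Proof.
rewrite /is_htt /xi /=.
split; [|split].
- move=> N; split; first by move=> tN X fX f x; exact: fX N tN f x.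
  move=> hN t ht tM; case: (ht) => hT [hF _].
  apply/hT => X fX; apply: hN => Y tY.
  exact: ((hF X).1 fX Y (tY t ht tM)).
- by move=> N; split=> h; exact: h.
- move=> N M' f inj tM' t ht tM; case: (ht) => _ [_ hH].
  exact: hH N M' f inj (tM' t ht tM).
Qed.

Definition tmeet (a b : tpair R) :=
  let T := fun Y => tT a Y /\ tT b Y in Tpair T (rightorth T).

Lemma meet_htt a b : is_htt a -> is_htt b -> is_htt (tmeet a b).
Proof.
rewrite {3}/is_htt /tmeet /=.
move=> ha hb; case: (ha) => hTa [hFa hHa]; case: (hb) => hTb [hFb hHb].
split; [|split].
- move=> N; split; first by move=> tN X fX f x; exact: fX N tN f x.
  move=> hN; split.
    apply/hTa => X fX; apply: hN => Y [tY _]; exact: ((hFa X).1 fX Y tY).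
  apply/hTb => X fX; apply: hN => Y [_ tY]; exact: ((hFb X).1 fX Y tY).
- by move=> N; split=> h; exact: h.
- move=> N M' f inj [t1 t2]; split; [exact: hHa N M' f inj t1|exact: hHb N M' f inj t2].
Qed.
End Basic.

Lemma ac3 (R : pzRingType) (V : lmodType R) (u1 v1 w1 u2 v2 w2 : V) :
  (u1 + v1 + w1) + (u2 + v2 + w2) = (u1 + u2) + (v1 + v2) + (w1 + w2).
Proof. by rewrite addrACA [X in X + _]addrACA. Qed.

Section Join.
Variable R : pzRingType.
Variable S : tpair R -> Prop.
Variable F : lmodType R -> Prop.
Hypothesis HF : forall X, F X <-> forall t, S t -> is_htt t -> tF t X.

Lemma join_hered (N M : lmodType R) (h : {linear N -> M}) :
  injective h -> leftorth F M -> leftorth F N.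
Proof.
move=> inj tM X fX f n0.
apply: contrapT => fn0.
pose good (A : set M) := (forall r x y, A x -> A y -> A (r *: x + y)) /\ (forall n, A (h n) -> f n = 0).
have [A [gA maxA]] : exists A, good A /\ forall B, proper A B -> ~ good B.
  apply: Zorn_bigcup => Fm Fsub tot; split.
  - move=> r x y [S1 FS1 xS1] [S2 FS2 yS2].
    case: (tot _ _ FS1 FS2) => sub.
    + by exists S2 => //; apply: (Fsub _ FS2).1 => //; exact: sub.
    + by exists S1 => //; apply: (Fsub _ FS1).1 => //; exact: sub.
  - move=> n [S1 FS1 hS1]; exact: (Fsub _ FS1).2 _ hS1.
case: gA => Acl Aint.
have A0' a : A a -> A 0.
  by move=> Aa; have := Acl (-1) a a Aa Aa; rewrite scaleN1r addNr.
have aux n k a : (a = 0 \/ A a) -> f k = 0 -> h n = a + h k -> f n = 0.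
  move=> Ha fk e.
  have e' : h (n - k) = a by rewrite linearB e addrK.
  have : f (n - k) = 0.
    case: Ha => [a0|Aa]; last by apply: Aint; rewrite e'.
    have -> : n - k = 0 by apply: inj; rewrite e' a0 linear0.
    by rewrite linear0.
  by rewrite linearB fk subr0.
have ext x : (forall a r k n, (a = 0 \/ A a) -> f k = 0 -> h n = a + r *: x + h k -> f n = 0) -> A x.
  move=> H; apply: contrapT => nAx.
  pose B := fun y => exists a r k, [/\ (a = 0 \/ A a), f k = 0 & y = a + r *: x + h k].
  apply: (maxA B).
  - split.
    + move=> y Ay; exists y, 0, 0; split; [by right|by rewrite linear0|by rewrite scale0r linear0 !addr0].
    + move=> BA; apply: nAx; apply: BA; exists 0, 1, 0; split; [by left|by rewrite linear0|by rewrite scale1r linear0 add0r addr0].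
  - split.
    + move=> r _ _ [a1 [r1 [k1 [Ha1 fk1 ->]]]] [a2 [r2 [k2 [Ha2 fk2 ->]]]].
      exists (r *: a1 + a2), (r * r1 + r2), (r *: k1 + k2); split.
      * case: Ha1 => [->|Aa1]; first by rewrite scaler0 add0r.
        case: Ha2 => [->|Aa2]; right; last exact: Acl.
        exact: Acl Aa1 (A0' _ Aa1).
      * by rewrite linearP fk1 fk2 scaler0 addr0.
      * by rewrite linearP !scalerDr scalerDl -scalerA ac3.
    + move=> n [a [r [k [Ha fk e]]]]; exact: H e.
have A0 : A 0.
  apply: ext => a r k n Ha fk e; apply: (aux n k a Ha fk).
  by rewrite e scaler0 addr0.
have Ahk k : f k = 0 -> A (h k).
  move=> fk; apply: ext => a r k' n Ha fk' e; apply: (aux n (r *: k + k') a Ha).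
  - by rewrite linearP fk fk' scaler0 addr0.
  - by rewrite e linearP addrA.
have subA : submod A by split.
have qk x : pi A x = 0 <-> A x := pi_ker subA x.
have nFQ : ~ F (quot A).
  move=> FQ; apply: fn0; apply: Aint; apply/qk; exact: tM _ FQ (pi A : {linear M -> quot A}) (h n0).
have [t [St [ht ntQ]]] : exists t, S t /\ is_htt t /\ ~ tF t (quot A).
  apply: contrapT => H; apply: nFQ; apply/HF => t St ht; apply: contrapT => ntQ.
  by apply: H; exists t.
case: (ht) => hT [hF hH].
have [Y [tY [g [y gy]]]] : exists Y, tT t Y /\ exists (g : {linear Y -> quot A}) y, g y <> 0.
  apply: contrapT => H; apply: ntQ; apply/hF => Y tY g y; apply: contrapT => gy.
  by apply: H; exists Y; split => //; exists g, y.
have [x0 qx0] := pi_surj (g y).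
have nAx0 : ~ A x0 by move=> /qk; rewrite qx0.
have [a [r [k [n [Ha fk e fn]]]]] : exists a r k n,
    [/\ (a = 0 \/ A a), f k = 0, h n = a + r *: x0 + h k & f n <> 0].
  apply: contrapT => H; apply: nAx0; apply: ext => a r k n Ha fk e.
  by apply: contrapT => fn; apply: H; exists a, r, k, n.
pose Wp := fun y' : Y => exists n, g y' = pi A (h n).
have subW : submod Wp.
  split; first by exists 0; rewrite (linear0 g) (linear0 h) pi0p.
  by move=> r' y1 y2 [n1 e1] [n2 e2]; exists (r' *: n1 + n2); rewrite (linearP g) (linearP h) piDp piZp e1 e2.
pose phif (w : subm Wp) : X := f (proj1_sig (cid (subm_valP subW w))).
have phi_spec (w : subm Wp) n' : g (subm_val w) = pi A (h n') -> phif w = f n'.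
  move=> e'; rewrite /phif; case: cid => n1 /= e1.
  have : A (h (n1 - n')) by apply/qk; rewrite (linearB h) piBp -e1 -e' subrr.
  by move=> /Aint; rewrite linearB => /eqP; rewrite subr_eq0 => /eqP.
have phi_lin : linear phif.
  move=> r' w1 w2.
  have [n1 e1] := subm_valP subW w1; have [n2 e2] := subm_valP subW w2.
  rewrite (phi_spec w1 n1 e1) (phi_spec w2 n2 e2).
  have -> : phif (r' *: w1 + w2) = f (r' *: n1 + n2).
    by apply: phi_spec; rewrite !linearP e1 e2.
  by rewrite linearP.
pose phiL : {linear subm Wp -> X} := mklin phi_lin.
have TW : tT t (subm Wp) := hH _ _ (@subm_val _ _ Wp : {linear subm Wp -> Y}) (@subm_val_inj _ _ Wp) tY.
have FXt : tF t X := (HF X).1 fX t St ht.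
have gZ : g (r *: y) = r *: g y.
  by rewrite -[r *: y]addr0 (linearP g) (linear0 g) addr0.
have [w0 w0e] : exists w0 : subm Wp, subm_val w0 = r *: y.
  apply: subm_ex => //; exists n.
  rewrite gZ -qx0 e !piDp piZp.
  have -> : pi A (h k) = 0 by apply/qk; exact: Ahk.
  have -> : pi A a = 0 by case: Ha => [->|/qk//]; rewrite pi0p.
  by rewrite add0r addr0.
apply: fn; rewrite -(phi_spec w0 n).
  exact: ((hT _).1 TW X FXt phiL w0).
rewrite w0e gZ -qx0 e !piDp piZp.
have -> : pi A (h k) = 0 by apply/qk; exact: Ahk.
have -> : pi A a = 0 by case: Ha => [->|/qk//]; rewrite pi0p.
by rewrite add0r addr0.
Qed.

Lemma join_htt : is_htt (Tpair (leftorth F) F).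
Proof.
rewrite /is_htt /=.
split; [by move=> N; split=> h; exact: h|split].
- move=> N; split; first by move=> fN Y tY f x; exact: tY N fN f x.
  move=> hN; apply/HF => t St ht; case: (ht) => hT [hF _].
  apply/hF => Y tY; apply: hN => Z fZ.
  exact: ((hT Y).1 tY Z ((HF Z).1 fZ t St ht)).
- exact: join_hered.
Qed.
End Join.

Section Final.
Variable R : pzRingType.

Lemma chi_htt (Q : lmodType R) : is_htt (chi Q).
Proof.
rewrite /chi; apply: (@join_htt R (fun t => tF t Q)).
by move=> X; split=> H t; [move=> St ht; exact: H t ht St|move=> ht St; exact: H t St ht].
Qed.

Lemma tjoin_htt (a b : tpair R) : is_htt a -> is_htt b -> is_htt (tors_join a b).
Proof.
move=> ha hb; rewrite /tors_join; apply: (@join_htt R (fun t => t = a \/ t = b)).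
move=> X; split.
  by move=> [Fa Fb] t [->|->] _.
by move=> H; split; apply: H => //; [left|right].
Qed.

Lemma Fa_lift (a : tpair R) (I Q3 : lmodType R) :
  is_htt a -> tF a I -> tors_le (chi I) (chi Q3) -> tF a Q3.
Proof.
move=> ha FaI le; case: (ha) => hT [hF _].
apply/hF => Y tY g y.
have tYc : tT (chi I) Y.
  move=> Z fZ; exact: ((hT Y).1 tY Z (fZ a ha FaI)).
have := le Y tYc Q3 (fun t _ h => h).
by move=> /(_ g y).
Qed.

Lemma key (M Q I : lmodType R) (p : {linear M -> I}) :
  (forall z, exists x, p x = z) -> tF (tmeet (chi Q) (xi M)) I -> tF (chi Q) I.
Proof.
move=> sur FI; case: (chi_htt Q) => hT [hF hH].
apply/hF => Y tY g y.
have xiM : tT (xi M) M by move=> t _ h.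
have tJc : tT (chi Q) (img g) := htt_quot (chi_htt Q) (@cores_sur _ _ _ g) tY.
have tIx : tT (xi M) I := htt_quot (xi_htt M) sur xiM.
have tJx : tT (xi M) (img g).
  case: (xi_htt M) => _ [_ hHx].
  exact: hHx _ _ (@subm_val _ _ (imP g) : {linear img g -> I}) (@subm_val_inj _ _ (imP g)) tIx.
have := FI (img g) (conj tJc tJx) (@subm_val _ _ (imP g) : {linear img g -> I}) (coresL g y).
by [].
Qed.
End Final.

Unset Implicit Arguments.
Theorem theorem4p4 (R : pzRingType) (M : lmodType R) :
  hollow (xi M) <-> quot_chi_directed M.
Proof.
have xiM : tT (xi M) M by move=> t _ h.
split.
- move=> hol N1 Q1 p1 N2 Q2 p2 [x1 nx1] [sur1 ker1] [x2 nx2] [sur2 ker2].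
  apply: contrapT => nodir.
  pose a := tmeet (chi Q1) (xi M); pose b := tmeet (chi Q2) (xi M).
  have ha : is_htt a := meet_htt (chi_htt Q1) (xi_htt M).
  have hb : is_htt b := meet_htt (chi_htt Q2) (xi_htt M).
  have hab : is_htt (tors_join a b) := tjoin_htt ha hb.
  have MT : tT (tors_join a b) M.
    move=> X [Fa Fb] f x; apply: contrapT => fx.
    have FaI : tF a (img f) :=
      htt_subF ha (@subm_val_inj _ _ (imP f) : injective (@subm_val _ _ (imP f) : {linear img f -> X})) Fa.
    have FbI : tF b (img f) :=
      htt_subF hb (@subm_val_inj _ _ (imP f) : injective (@subm_val _ _ (imP f) : {linear img f -> X})) Fb.
    apply: nodir; exists (fun x => coresL f x = 0), (img f), (coresL f); split.
    + by exists x => /cores0.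
    + by split; [exact: cores_sur|].
    + move=> Y; rewrite /chi /=; move=> hY Z fZ; apply: hY => t ht tQ.
      exact (fZ t ht (key (@cores_sur _ _ _ f) FaI ht tQ)).
    + move=> Y; rewrite /chi /=; move=> hY Z fZ; apply: hY => t ht tQ.
      exact (fZ t ht (key (@cores_sur _ _ _ f) FbI ht tQ)).
  have le_ab : tors_le (xi M) (tors_join a b) by move=> Y hY; exact: hY _ hab MT.
  have la : tors_le a (xi M) by move=> Y [_ h].
  have lb : tors_le b (xi M) by move=> Y [_ h].
  case: (hol a b ha hb la lb le_ab) => le.
  + have [hM _] := le M xiM.
    apply: nx1; apply/ker1; exact: hM Q1 (fun t _ h => h) p1 x1.
  + have [hM _] := le M xiM.
    apply: nx2; apply/ker2; exact: hM Q2 (fun t _ h => h) p2 x2.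
- move=> dir a b ha hb la lb lj.
  have MT : tT (tors_join a b) M := lj M xiM.
  case: (EM (tT a M)) => [tMa|ntMa].
    by left; move=> Y hY; exact: hY a ha tMa.
  case: (EM (tT b M)) => [tMb|ntMb].
    by right; move=> Y hY; exact: hY b hb tMb.
  exfalso.
  have ex_nz (c : tpair R) : is_htt c -> ~ tT c M ->
      exists (X : lmodType R) (f : {linear M -> X}) (x : M), tF c X /\ f x <> 0.
    case=> hT _ nt; apply: contrapT => H; apply: nt; apply/hT => X fX f x.
    by apply: contrapT => fx; apply: H; exists X, f, x.
  have [X1 [f1 [x1 [F1 fx1]]]] := ex_nz a ha ntMa.
  have [X2 [f2 [x2 [F2 fx2]]]] := ex_nz b hb ntMb.
  have FaI : tF a (img f1) :=
    htt_subF ha (@subm_val_inj _ _ (imP f1) : injective (@subm_val _ _ (imP f1) : {linear img f1 -> X1})) F1.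
  have FbI : tF b (img f2) :=
    htt_subF hb (@subm_val_inj _ _ (imP f2) : injective (@subm_val _ _ (imP f2) : {linear img f2 -> X2})) F2.
  have [N3 [Q3 [p3 [[x3 nx3] [sur3 ker3] le1 le2]]]] :=
    dir (fun x => coresL f1 x = 0) _ (coresL f1) (fun x => coresL f2 x = 0) _ (coresL f2)
      (ex_intro _ x1 (fun h => fx1 ((cores0 f1 x1).1 h)))
      (conj (@cores_sur _ _ _ f1) (fun x => iff_refl _))
      (ex_intro _ x2 (fun h => fx2 ((cores0 f2 x2).1 h)))
      (conj (@cores_sur _ _ _ f2) (fun x => iff_refl _)).
  have FaQ := Fa_lift ha FaI le1.
  have FbQ := Fa_lift hb FbI le2.
  apply: nx3; apply/ker3; exact: MT Q3 (conj FaQ FbQ) p3 x3.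
Qed.
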